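(* Let $G=(V,E)$ be a connected, locally finite, undirected graph and $s:V\to\mathbb{R}$ with odometer $u_\infty$. The following are equivalent: (1) there exists a legal stabilizing toppling procedure for $s$; (2) there exists a stabilizing toppling procedure for $s$; (3) $\mathcal{F}_s\neq\emptyset$; (4) $u_\infty(x)<\infty$ for all $x\in V$; (5) every legal toppling procedure for $s$ is finite; (6) the parallel toppling procedure for $s$ is finite.
   Context: $\Delta u(x)=\sum_{y\sim x}(u(y)-u(x))$; $\mathcal{F}_s=\{f:V\to\mathbb{R}: f\ge0,\ s+\Delta f\le1\}$; odometer $u_\infty(x)=\inf\{f(x):f\in\mathcal{F}_s\}$ ($\inf\emptyset=\infty$). A toppling procedure: a well-ordered closed set $T\subset[0,\infty)$ with $0\in T$ and $(t,x)\mapsto u_t(x)\in[0,\infty)$ with $u_0=0$, $u_t(x)$ nondecreasing in $t$, and $t_n\uparrow t\Rightarrow u_{t_n}(x)\uparrow u_t(x)$. With $s_t=s+\Delta u_t$, $t^-=\sup\{r\in T:r<t\}$: legal for $s$ if $u_t(x)-u_{t^-}(x)\le (s_{t^-}(x)-1)^+/\deg(x)$ for all $x$, $t\in T\setminus\{0\}$; finite if $u_\infty(x)=\lim_{t\to\sup T}u_t(x)<\infty$ for all $x$; stabilizing if finite and $s+\Delta u_\infty\le1$. The parallel toppling procedure has $T=\mathbb{N}$ and $u_t(x)-u_{t-1}(x)=(s_{t-1}(x)-1)^+/\deg(x)$ for all $x$, $t\ge1$. *)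

(* Defs.v *)
From Stdlib Require Import Reals List Relations ZArith.
From Coquelicot Require Import Coquelicot.
Open Scope R_scope.

Record graph (V : Type) := Graph {
  nbrs : V -> list V;
  nbrs_nodup : forall x, NoDup (nbrs x);
  nbrs_sym : forall x y, In y (nbrs x) -> In x (nbrs y);
  nbrs_irrefl : forall x, ~ In x (nbrs x)
}.
Arguments nbrs {V} g x.

Definition adj {V} (G : graph V) (x y : V) : Prop := In y (nbrs G x).

Definition connected {V} (G : graph V) : Prop :=
  forall x y : V, clos_refl_trans V (adj G) x y.

(* every vertex has degree >= 1 (needed for the divisions by deg(x)) *)
Definition no_isolated {V} (G : graph V) : Prop :=
  forall x : V, nbrs G x <> nil.

Definition deg {V} (G : graph V) (x : V) : R := INR (length (nbrs G x)).

Definition lap {V} (G : graph V) (u : V -> R) (x : V) : R :=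
  fold_right Rplus 0 (map (fun y => u y - u x) (nbrs G x)).

Definition Fs {V} (G : graph V) (s : V -> R) (f : V -> R) : Prop :=
  (forall x, 0 <= f x) /\ (forall x, s x + lap G f x <= 1).

(* odometer u_∞(x) = inf { f x | f ∈ F_s } in the extended reals (inf ∅ = +∞) *)
Definition odometer {V} (G : graph V) (s : V -> R) (x : V) : Rbar :=
  Glb_Rbar (fun r => exists f, Fs G s f /\ r = f x).

Definition well_ordered (T : R -> Prop) : Prop :=
  forall A : R -> Prop, (forall r, A r -> T r) -> (exists r, A r) ->
    exists m, A m /\ forall r, A r -> m <= r.

(* A toppling procedure (T, u); only the values u t for t ∈ T matter. *)
Definition toppling_procedure {V} (T : R -> Prop) (u : R -> V -> R) : Prop :=
  well_ordered T /\ closed T /\ (forall t, T t -> 0 <= t) /\ T 0 /\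
  (forall x, u 0 x = 0) /\
  (forall t x, T t -> 0 <= u t x) /\
  (forall t t' x, T t -> T t' -> t <= t' -> u t x <= u t' x) /\
  (forall (tn : nat -> R) (t : R) (x : V),
      (forall n, T (tn n)) -> T t -> (forall n, tn n <= tn (S n)) ->
      is_lim_seq tn t -> is_lim_seq (fun n => u (tn n) x) (u t x)).

Definition tminus (T : R -> Prop) (t : R) : R :=
  real (Lub_Rbar (fun r => T r /\ r < t)).

Definition legal {V} (G : graph V) (s : V -> R) (T : R -> Prop) (u : R -> V -> R) : Prop :=
  forall t, T t -> t <> 0 -> forall x,
    u t x - u (tminus T t) x <= Rmax 0 (s x + lap G (u (tminus T t)) x - 1) / deg G x.

(* u_∞(x) = lim_{t -> sup T} u_t(x); since t ↦ u_t(x) is nondecreasing on T,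
   this limit is the supremum over T (in the extended reals). *)
Definition ulim {V} (T : R -> Prop) (u : R -> V -> R) (x : V) : Rbar :=
  Lub_Rbar (fun r => exists t, T t /\ r = u t x).

Definition finite_proc {V} (T : R -> Prop) (u : R -> V -> R) : Prop :=
  forall x : V, is_finite (ulim T u x).

Definition stabilizing {V} (G : graph V) (s : V -> R) (T : R -> Prop) (u : R -> V -> R) : Prop :=
  finite_proc T u /\ forall x, s x + lap G (fun y => real (ulim T u y)) x <= 1.

Fixpoint par_seq {V} (G : graph V) (s : V -> R) (n : nat) : V -> R :=
  match n with
  | O => fun _ => 0
  | S m => let p := par_seq G s m in
           fun x => p x + Rmax 0 (s x + lap G p x - 1) / deg G x
  end.

Definition par_T (t : R) : Prop := exists n : nat, t = INR n.

Definition par_u {V} (G : graph V) (s : V -> R) (t : R) : V -> R :=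
  par_seq G s (Z.to_nat (Int_part t)).

(* Main.v *)
Require Import Defs.
From Stdlib Require Import Reals List Relations ZArith Lra Lia Classical ClassicalEpsilon.
From Coquelicot Require Import Coquelicot.
Open Scope R_scope.

Lemma deg_pos {V} (G : graph V) x : no_isolated G -> 0 < deg G x.
Proof.
  intros Hn. unfold deg. specialize (Hn x). destruct (nbrs G x) as [|a l]; [congruence|].
  simpl length. rewrite S_INR. pose proof (pos_INR (length l)). lra.
Qed.

Definition nsum {V} (G : graph V) (u : V -> R) (x : V) : R :=
  fold_right Rplus 0 (map u (nbrs G x)).

Lemma lap_nsum {V} (G : graph V) u x : lap G u x = nsum G u x - deg G x * u x.
Proof.
  unfold lap, nsum, deg. induction (nbrs G x) as [|a l IH]; simpl map; simpl fold_right.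
  - simpl. ring.
  - rewrite IH. simpl length. rewrite S_INR. ring.
Qed.

Lemma nsum_le {V} (G : graph V) u v x : (forall y, u y <= v y) -> nsum G u x <= nsum G v x.
Proof.
  intros H. unfold nsum. induction (nbrs G x) as [|a l IH]; simpl; [lra|].
  specialize (H a). lra.
Qed.

Lemma step_le {V} (G : graph V) s f u x : no_isolated G -> Fs G s f ->
  (forall y, u y <= f y) -> u x + Rmax 0 (s x + lap G u x - 1) / deg G x <= f x.
Proof.
  intros Hn [Hf0 Hf] Hu. pose proof (deg_pos G x Hn) as Hd.
  set (d := deg G x) in *.
  unfold Rmax. destruct (Rle_dec 0 (s x + lap G u x - 1)) as [Hle|Hle].
  - specialize (Hf x). rewrite lap_nsum in Hf |- *. fold d in Hf |- *.
    pose proof (nsum_le G u f x Hu) as HN.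
    assert (Hk : (s x + (nsum G u x - d * u x) - 1) <= d * (f x - u x)) by lra.
    assert (Hk2 : (s x + (nsum G u x - d * u x) - 1) / d <= f x - u x).
    { apply (Rmult_le_reg_r d); [lra|]. unfold Rdiv. rewrite Rmult_assoc, Rinv_l by lra. lra. }
    lra.
  - unfold Rdiv. rewrite Rmult_0_l. specialize (Hu x). lra.
Qed.

Lemma lub_core (E : R -> Prop) l : Lub_Rbar E = Finite l ->
  (forall r, E r -> r <= l) /\ (forall eps, 0 < eps -> exists r, E r /\ l - eps < r).
Proof.
  intros Hl. destruct (Lub_Rbar_correct E) as [Hub Hlub]. rewrite Hl in Hub, Hlub. split.
  - intros r Er. exact (Hub r Er).
  - intros eps He. destruct (classic (exists r, E r /\ l - eps < r)) as [H|Hno]; auto.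
    exfalso. assert (is_ub_Rbar E (l - eps)).
    { intros r Er. simpl. apply Rnot_lt_le. intro. apply Hno; eauto. }
    specialize (Hlub _ H). simpl in Hlub. lra.
Qed.

Lemma lub_finite_facts (E : R -> Prop) a b : E a -> (forall r, E r -> r <= b) ->
  exists l, Lub_Rbar E = Finite l /\ (forall r, E r -> r <= l) /\
            (forall eps, 0 < eps -> exists r, E r /\ l - eps < r).
Proof.
  intros Ea Hb. destruct (Lub_Rbar_correct E) as [Hub Hlub].
  destruct (Lub_Rbar E) as [l| |] eqn:Hl.
  - exists l. split; auto. apply lub_core; auto.
  - exfalso. assert (is_ub_Rbar E b) by (intros r Er; simpl; auto).
    specialize (Hlub _ H). simpl in Hlub. exact Hlub.
  - exfalso. specialize (Hub a Ea). simpl in Hub. exact Hub.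
Qed.

Fixpoint runmax (r : nat -> R) (n : nat) : R :=
  match n with O => r O | S k => Rmax (runmax r k) (r (S k)) end.

Lemma runmax_in (P : R -> Prop) r : (forall n, P (r n)) -> forall n, P (runmax r n).
Proof. intros H n. induction n; simpl; auto. unfold Rmax. destruct Rle_dec; auto. Qed.

Lemma runmax_ge r n : r n <= runmax r n.
Proof. destruct n; simpl. lra. apply Rmax_r. Qed.

Lemma runmax_incr r n : runmax r n <= runmax r (S n).
Proof. simpl. apply Rmax_l. Qed.

Lemma inv_INR_lim : is_lim_seq (fun n => / INR (S n)) 0.
Proof.
  assert (H : is_lim_seq (fun n => INR (S n)) p_infty).
  { apply (is_lim_seq_incr_1 (fun n => INR n)). apply is_lim_seq_INR. }
  pose proof (is_lim_seq_inv _ _ H) as H2. simpl in H2. apply H2. discriminate.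
Qed.

Lemma ball_R (x y : R) (e : posreal) : ball x e y -> Rabs (y - x) < e.
Proof. unfold ball; simpl; unfold AbsRing_ball, abs, minus, plus, opp; simpl. auto. Qed.
Lemma ball_R' (x y : R) (e : posreal) : Rabs (y - x) < e -> ball x e y.
Proof. unfold ball; simpl; unfold AbsRing_ball, abs, minus, plus, opp; simpl. auto. Qed.

Lemma least_action {V} (G : graph V) s T u f : no_isolated G -> toppling_procedure T u ->
  legal G s T u -> Fs G s f -> forall t, T t -> forall x, u t x <= f x.
Proof.
  intros Hn Htp Hleg Hf.
  destruct Htp as (Hwo & Hcl & Hpos & HT0 & Hu0 & Hnn & Hmono & Hcont).
  apply NNPP. intro Hno.
  assert (HA : exists r, T r /\ exists x, f x < u r x).
  { apply NNPP. intro H. apply Hno. intros t Tt x. apply Rnot_lt_le. intro Hlt.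
    apply H. eauto. }
  destruct (Hwo (fun r => T r /\ exists x, f x < u r x)) as [m [[Tm [x Hx]] Hm]].
  { intros r [? ?]; auto. }
  { destruct HA as [r Hr]; eauto. }
  assert (Hmin : forall r, T r -> r < m -> forall y, u r y <= f y).
  { intros r Tr Hrm y. apply Rnot_lt_le. intro Hlt.
    specialize (Hm r (conj Tr (ex_intro _ y Hlt))). lra. }
  assert (Hm0 : m <> 0).
  { intro E. subst m. rewrite Hu0 in Hx. destruct Hf as [Hf0 _]. specialize (Hf0 x). lra. }
  assert (Hmp : 0 < m) by (pose proof (Hpos m Tm); lra).
  destruct (lub_finite_facts (fun r => T r /\ r < m) 0 m) as [l [Hl [Hub Happ]]].
  { split; auto. }
  { intros r [_ H]; lra. }
  assert (Hlm : l <= m).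
  { apply Rnot_lt_le. intro H. destruct (Happ (l - m)) as [r [[_ Hr] Hr2]]; lra. }
  assert (Tl : T l).
  { apply Hcl. intros [eps Heps]. destruct (Happ eps (cond_pos eps)) as [r [[Tr Hr] Hr2]].
    apply (Heps r); auto. apply ball_R'. specialize (Hub r (conj Tr Hr)).
    apply Rabs_def1; lra. }
  assert (Htm : tminus T m = l) by (unfold tminus; rewrite Hl; reflexivity).
  destruct (Rlt_or_le l m) as [Hlt|Hge].
  - specialize (Hleg m Tm Hm0 x). rewrite Htm in Hleg.
    pose proof (step_le G s f (u l) x Hn Hf (Hmin l Tl Hlt)). lra.
  - assert (Elm : l = m) by lra. rewrite Elm in Happ.
    assert (Hap : forall n, exists r, (T r /\ r < m) /\ m - / INR (S n) < r).
    { intros n. apply Happ. apply Rinv_0_lt_compat. apply lt_0_INR. lia. }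
    set (rr := fun n => proj1_sig (constructive_indefinite_description _ (Hap n))).
    assert (Hrr : forall n, (T (rr n) /\ rr n < m) /\ m - / INR (S n) < rr n).
    { intro n. unfold rr. destruct (constructive_indefinite_description _ (Hap n)); auto. }
    set (tn := runmax rr).
    assert (Htn : forall n, T (tn n) /\ tn n < m).
    { apply (runmax_in (fun r => T r /\ r < m)). intro n; apply Hrr. }
    assert (Hlim : is_lim_seq tn m).
    { apply (is_lim_seq_le_le (fun n => m - / INR (S n)) _ (fun _ => m)).
      - intros n. split.
        + pose proof (runmax_ge rr n). destruct (Hrr n) as [_ H0]. unfold tn. lra.
        + destruct (Htn n); lra.
      - replace (Finite m) with (Finite (m - 0)) by (f_equal; ring).
        apply is_lim_seq_minus'. apply is_lim_seq_const. apply inv_INR_lim.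
      - apply is_lim_seq_const. }
    pose proof (Hcont tn m x (fun n => proj1 (Htn n)) Tm (runmax_incr rr) Hlim) as Hc.
    pose proof (is_lim_seq_le _ _ _ _ (fun n => Hmin (tn n) (proj1 (Htn n)) (proj2 (Htn n)) x)
                   Hc (is_lim_seq_const (f x))) as Hle.
    simpl in Hle. lra.
Qed.

Lemma par_S {V} (G : graph V) s n x : par_seq G s (S n) x =
  par_seq G s n x + Rmax 0 (s x + lap G (par_seq G s n) x - 1) / deg G x.
Proof. reflexivity. Qed.

Lemma rmax_div_nn a d : 0 < d -> 0 <= Rmax 0 a / d.
Proof. intros. unfold Rdiv. apply Rmult_le_pos; [apply Rmax_l|left; apply Rinv_0_lt_compat; auto]. Qed.

Lemma par_step {V} (G : graph V) s n x : no_isolated G -> par_seq G s n x <= par_seq G s (S n) x.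
Proof. intros Hn. rewrite par_S. pose proof (rmax_div_nn (s x + lap G (par_seq G s n) x - 1) _ (deg_pos G x Hn)). lra. Qed.

Lemma par_nonneg {V} (G : graph V) s n x : no_isolated G -> 0 <= par_seq G s n x.
Proof. intros Hn. induction n. simpl; lra. pose proof (par_step G s n x Hn). lra. Qed.

Lemma par_mono {V} (G : graph V) s n m x : no_isolated G -> (n <= m)%nat -> par_seq G s n x <= par_seq G s m x.
Proof. intros Hn H. induction H. lra. pose proof (par_step G s m x Hn). lra. Qed.

Lemma par_u_INR {V} (G : graph V) s n : par_u G s (INR n) = par_seq G s n.
Proof.
  unfold par_u, Int_part. rewrite <- (tech_up (INR n) (Z.of_nat n + 1)).
  - replace (Z.of_nat n + 1 - 1)%Z with (Z.of_nat n) by lia. rewrite Nat2Z.id. reflexivity.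
  - rewrite plus_IZR, <- INR_IZR_INZ. lra.
  - rewrite plus_IZR, <- INR_IZR_INZ. lra.
Qed.

Lemma INR_close k m : Rabs (INR k - INR m) < 1/2 -> k = m.
Proof.
  intros H. apply Rabs_def2 in H.
  destruct (lt_eq_lt_dec k m) as [[Hl|Hl]|Hl]; auto; exfalso.
  - apply le_INR in Hl. rewrite S_INR in Hl. lra.
  - apply le_INR in Hl. rewrite S_INR in Hl. lra.
Qed.

Lemma par_wo : well_ordered par_T.
Proof.
  intros A HA [r Ar]. destruct (HA r Ar) as [n ->].
  induction n as [n IH] using (well_founded_induction lt_wf).
  destruct (classic (exists k, (k < n)%nat /\ A (INR k))) as [[k [Hk Ak]]|Hno].
  - exact (IH k Hk Ak).
  - exists (INR n); split; auto. intros r' Ar'. destruct (HA r' Ar') as [k ->].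
    apply le_INR. destruct (le_lt_dec n k); auto. exfalso; apply Hno; eauto.
Qed.

Lemma par_closed : closed par_T.
Proof.
  intros x Hx. apply NNPP; intro Hnx. apply Hx.
  destruct (Rlt_or_le x 0) as [Hneg|Hpos].
  - exists (mkposreal (-x) ltac:(lra)). intros y Hy [k ->]. apply ball_R in Hy. simpl in Hy.
    apply Rabs_def2 in Hy. pose proof (pos_INR k). lra.
  - destruct (base_Int_part x) as [Hb1 Hb2].
    assert (Hz : (0 <= Int_part x)%Z).
    { assert (IZR (-1) < IZR (Int_part x)) by lra. apply lt_IZR in H. lia. }
    set (a := Z.to_nat (Int_part x)).
    assert (Ha : INR a = IZR (Int_part x)) by (unfold a; rewrite INR_IZR_INZ, Z2Nat.id; auto).
    assert (Hxa : x <> INR a) by (intro E; apply Hnx; exists a; auto).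
    assert (Hxa1 : x <> INR (S a)) by (intro E; apply Hnx; exists (S a); auto).
    rewrite S_INR in Hxa1.
    assert (H1 : INR a < x) by lra.
    assert (H2 : x < INR a + 1) by lra.
    exists (mkposreal (Rmin (x - INR a) (INR a + 1 - x)) ltac:(apply Rmin_pos; lra)).
    intros y Hy [k ->]. apply ball_R in Hy. simpl in Hy. apply Rabs_def2 in Hy.
    pose proof (Rmin_l (x - INR a) (INR a + 1 - x)). pose proof (Rmin_r (x - INR a) (INR a + 1 - x)).
    destruct (le_lt_dec k a) as [Hk|Hk].
    + apply le_INR in Hk. lra.
    + apply le_INR in Hk. rewrite S_INR in Hk. lra.
Qed.

Lemma par_tp {V} (G : graph V) s : no_isolated G -> toppling_procedure par_T (par_u G s).
Proof.
  intros Hn. split; [apply par_wo|]. split; [apply par_closed|].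
  split; [intros t [n ->]; apply pos_INR|].
  split; [exists 0%nat; reflexivity|].
  split; [intros x; change (par_u G s (INR 0) x = 0); rewrite par_u_INR; reflexivity|].
  split; [intros t x [n ->]; rewrite par_u_INR; apply par_nonneg; auto|].
  split; [intros t t' x [n ->] [m ->] H; rewrite !par_u_INR; apply par_mono; auto; apply INR_le; auto|].
  intros tn t x Htn [m ->] _ Hlim.
  apply is_lim_seq_spec in Hlim. specialize (Hlim (mkposreal (1/2) ltac:(lra))).
  apply (is_lim_seq_ext_loc (fun _ => par_u G s (INR m) x)); [|apply is_lim_seq_const].
  destruct Hlim as [N HN]. exists N. intros n Hnn. specialize (HN n Hnn). simpl in HN.
  destruct (Htn n) as [k Hk]. rewrite Hk in *. rewrite (INR_close k m HN). reflexivity.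
Qed.

Lemma par_legal {V} (G : graph V) s : legal G s par_T (par_u G s).
Proof.
  intros t [n ->] Hn0 x. destruct n as [|n]; [exfalso; apply Hn0; reflexivity|].
  replace (tminus par_T (INR (S n))) with (INR n).
  - rewrite !par_u_INR, par_S. lra.
  - unfold tminus. rewrite (is_lub_Rbar_unique _ (INR n)); [reflexivity|]. split.
    + intros r [[k ->] Hk]. simpl. apply le_INR. apply INR_lt in Hk. lia.
    + intros b Hb. apply Hb. split; [exists n; reflexivity|]. apply lt_INR; lia.
Qed.

Lemma lap_lim {V} (G : graph V) (un : nat -> V -> R) (v : V -> R) x :
  (forall y, is_lim_seq (fun n => un n y) (v y)) ->
  is_lim_seq (fun n => lap G (un n) x) (lap G v x).
Proof.
  intros H. unfold lap. induction (nbrs G x) as [|a l IH]; simpl.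
  - apply is_lim_seq_const.
  - apply is_lim_seq_plus'; [apply is_lim_seq_minus'; apply H|exact IH].
Qed.

Lemma ulim_finite_eq {V} T (u : R -> V -> R) x : finite_proc T u ->
  Lub_Rbar (fun r => exists t, T t /\ r = u t x) = Finite (real (ulim T u x)).
Proof. intros H. specialize (H x). unfold is_finite in H. rewrite H. reflexivity. Qed.

Lemma lim_par {V} (G : graph V) s x : no_isolated G -> finite_proc par_T (par_u G s) ->
  is_lim_seq (fun n => par_seq G s n x) (real (ulim par_T (par_u G s) x)).
Proof.
  intros Hn Hf. destruct (lub_core _ _ (ulim_finite_eq par_T (par_u G s) x Hf)) as [Hub Happ].
  set (L := real (ulim par_T (par_u G s) x)) in *.
  assert (Hin : forall n, par_seq G s n x <= L).
  { intros n. apply Hub. exists (INR n). split; [exists n; reflexivity|]. rewrite par_u_INR; reflexivity. }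
  apply is_lim_seq_spec. intros eps.
  destruct (Happ eps (cond_pos eps)) as [r [[t [[N ->] ->]] Hr]].
  rewrite par_u_INR in Hr. exists N. intros n Hnn.
  pose proof (par_mono G s N n x Hn Hnn). pose proof (Hin n).
  apply Rabs_def1; lra.
Qed.

Lemma par_stab {V} (G : graph V) s : no_isolated G -> finite_proc par_T (par_u G s) ->
  stabilizing G s par_T (par_u G s).
Proof.
  intros Hn Hf. split; auto. intros x.
  set (L := fun y => real (ulim par_T (par_u G s) y)).
  pose proof (deg_pos G x Hn) as Hd. set (d := deg G x) in *.
  assert (Ha : is_lim_seq (fun n => s x + lap G (par_seq G s n) x - 1) (s x + lap G L x - 1)).
  { apply is_lim_seq_minus'; [|apply is_lim_seq_const].
    apply is_lim_seq_plus'; [apply is_lim_seq_const|].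
    apply lap_lim. intros y. apply lim_par; auto. }
  assert (Hb : is_lim_seq (fun n => d * (par_seq G s (S n) x - par_seq G s n x)) 0).
  { pose proof (lim_par G s x Hn Hf) as H1.
    pose proof (proj1 (is_lim_seq_incr_1 _ _) H1) as H2.
    pose proof (is_lim_seq_scal_l _ d _ (is_lim_seq_minus' _ _ _ _ H2 H1)) as H3.
    simpl in H3. replace (d * (real (ulim par_T (par_u G s) x) - real (ulim par_T (par_u G s) x))) with 0 in H3 by ring.
    exact H3. }
  assert (Hab : forall n, s x + lap G (par_seq G s n) x - 1 <= d * (par_seq G s (S n) x - par_seq G s n x)).
  { intros n. rewrite par_S. fold d.
    replace (d * (par_seq G s n x + Rmax 0 (s x + lap G (par_seq G s n) x - 1) / d - par_seq G s n x))
      with (Rmax 0 (s x + lap G (par_seq G s n) x - 1)) by (field; lra).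
    apply Rmax_r. }
  pose proof (is_lim_seq_le _ _ _ _ Hab Ha Hb) as Hle.
  simpl in Hle. lra.
Qed.

Theorem corollary2p11 (V : Type) (G : graph V) (s : V -> R) :
  connected G -> no_isolated G ->
  let P1 := exists (T : R -> Prop) (u : R -> V -> R),
              toppling_procedure T u /\ legal G s T u /\ stabilizing G s T u in
  let P2 := exists (T : R -> Prop) (u : R -> V -> R),
              toppling_procedure T u /\ stabilizing G s T u in
  let P3 := exists f : V -> R, Fs G s f in
  let P4 := forall x : V, Rbar_lt (odometer G s x) p_infty in
  let P5 := forall (T : R -> Prop) (u : R -> V -> R),
              toppling_procedure T u -> legal G s T u -> finite_proc T u in
  let P6 := finite_proc par_T (par_u G s) in
  (P1 <-> P2) /\ (P2 <-> P3) /\ (P3 <-> P4) /\ (P4 <-> P5) /\ (P5 <-> P6).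
Proof.
  intros Hc Hn. cbv zeta.
  assert (H12 : (exists (T : R -> Prop) (u : R -> V -> R),
              toppling_procedure T u /\ legal G s T u /\ stabilizing G s T u) ->
              exists (T : R -> Prop) (u : R -> V -> R),
              toppling_procedure T u /\ stabilizing G s T u).
  { intros (T & u & H1 & _ & H3). eauto. }
  assert (H23 : (exists (T : R -> Prop) (u : R -> V -> R),
              toppling_procedure T u /\ stabilizing G s T u) -> exists f : V -> R, Fs G s f).
  { intros (T & u & Htp & Hfin & Hst). exists (fun y => real (ulim T u y)). split; auto.
    intros y. destruct (Lub_Rbar_correct (fun r => exists t, T t /\ r = u t y)) as [Hub _].
    destruct Htp as (_ & _ & _ & HT0 & Hu0 & _).
    specialize (Hub 0 (ex_intro _ 0 (conj HT0 (eq_sym (Hu0 y))))).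
    rewrite (ulim_finite_eq T u y Hfin) in Hub. exact Hub. }
  assert (H35 : (exists f : V -> R, Fs G s f) -> forall (T : R -> Prop) (u : R -> V -> R),
              toppling_procedure T u -> legal G s T u -> finite_proc T u).
  { intros [f Hf] T u Htp Hleg x.
    pose proof (least_action G s T u f Hn Htp Hleg Hf) as Hla.
    destruct Htp as (_ & _ & _ & HT0 & Hu0 & _).
    destruct (lub_finite_facts (fun r => exists t, T t /\ r = u t x) 0 (f x)) as [l [Hl _]].
    - exists 0. split; auto.
    - intros r [t [Tt ->]]. apply Hla; auto.
    - unfold is_finite, ulim. rewrite Hl. reflexivity. }
  assert (H34 : (exists f : V -> R, Fs G s f) -> forall x : V, Rbar_lt (odometer G s x) p_infty).
  { intros [f Hf] x. destruct (Glb_Rbar_correct (fun r => exists f, Fs G s f /\ r = f x)) as [Hlb _].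
    specialize (Hlb (f x) (ex_intro _ f (conj Hf eq_refl))). unfold odometer.
    destruct (Glb_Rbar _); simpl in *; auto. }
  assert (H43 : (forall x : V, Rbar_lt (odometer G s x) p_infty) -> exists f : V -> R, Fs G s f).
  { intros H4. destruct (classic (exists f, Fs G s f)) as [|Hno]; auto. exfalso.
    destruct (classic (exists x : V, True)) as [[x _]|Hv].
    - specialize (H4 x). unfold odometer in H4.
      destruct (Glb_Rbar_correct (fun r => exists f, Fs G s f /\ r = f x)) as [_ Hglb].
      assert (is_lb_Rbar (fun r => exists f, Fs G s f /\ r = f x) p_infty).
      { intros r [f [Hf _]]. exfalso; apply Hno; eauto. }
      specialize (Hglb _ H). destruct (Glb_Rbar _); simpl in *; auto.
    - apply Hno. exists (fun _ => 0). split; intros x; exfalso; apply Hv; eauto. }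
  assert (H56 : (forall (T : R -> Prop) (u : R -> V -> R),
              toppling_procedure T u -> legal G s T u -> finite_proc T u) ->
              finite_proc par_T (par_u G s)).
  { intros H5. apply H5. apply par_tp; auto. apply par_legal. }
  assert (H61 : finite_proc par_T (par_u G s) -> exists (T : R -> Prop) (u : R -> V -> R),
              toppling_procedure T u /\ legal G s T u /\ stabilizing G s T u).
  { intros H6. exists par_T, (par_u G s). split; [apply par_tp; auto|].
    split; [apply par_legal|]. apply par_stab; auto. }
  tauto.
Qed.
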